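(* Let $\alpha,\beta,\gamma,\delta\in\mathbb{R}$ with $\alpha+\delta\neq 0$ and $\alpha\gamma=0$, and let $G_7$ be the connected, simply connected Lie group whose Lie algebra $\mathfrak{g}_7$ has a basis $\{e_1,e_2,e_3\}$ with $[e_1,e_2]=-\alpha e_1-\beta e_2-\beta e_3$, $[e_1,e_3]=\alpha e_1+\beta e_2+\beta e_3$, $[e_2,e_3]=\gamma e_1+\delta e_2+\delta e_3$, equipped with the left-invariant Lorentzian metric $g$ for which $\{e_1,e_2,e_3\}$ is pseudo-orthonormal with $e_3$ timelike, and with the product structure $J$. Let $\lambda_0,c\in\mathbb{R}$. Then there exists a derivation $D$ of $\mathfrak{g}_7$ with $\widetilde{\mathrm{Ric}}^1=(s^1\lambda_0+c)\mathrm{Id}+D$ (i.e. $(G_7,g,J)$ is an algebraic Schouten soliton associated to the Kobayashi–Nomizu connection $\nabla^1$) if and only if $\alpha\neq0$, $\beta=\gamma=0$, $\delta=\frac12\alpha$ and $c=-\frac12\alpha^2+2\alpha^2\lambda_0$.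
   Context: Pseudo-orthonormal means $g(e_1,e_1)=g(e_2,e_2)=1$, $g(e_3,e_3)=-1$, $g(e_i,e_j)=0$ for $i\neq j$; left-invariant tensors are identified with their values on $\mathfrak{g}$. $\nabla$ is the Levi-Civita connection of $g$. The product structure $J$ is the left-invariant endomorphism with $Je_1=e_1$, $Je_2=e_2$, $Je_3=-e_3$. The canonical connection is $\nabla^0_XY=\nabla_XY-\frac12(\nabla_XJ)JY$, and the Kobayashi–Nomizu connection is $\nabla^1_XY=\nabla^0_XY-\frac14[(\nabla_YJ)JX-(\nabla_{JY}J)X]$. For $k=0,1$: $R^k(X,Y)Z=\nabla^k_X\nabla^k_YZ-\nabla^k_Y\nabla^k_XZ-\nabla^k_{[X,Y]}Z$; $\rho^k(X,Y)=-g(R^k(X,e_1)Y,e_1)-g(R^k(X,e_2)Y,e_2)+g(R^k(X,e_3)Y,e_3)$; $\widetilde\rho^k(X,Y)=\frac12(\rho^k(X,Y)+\rho^k(Y,X))$; $\widetilde{\mathrm{Ric}}^k$ is defined by $\widetilde\rho^k(X,Y)=g(\widetilde{\mathrm{Ric}}^k(X),Y)$; and $s^k=\widetilde\rho^k(e_1,e_1)+\widetilde\rho^k(e_2,e_2)-\widetilde\rho^k(e_3,e_3)$. A derivation of $\mathfrak{g}$ is a linear map $D$ with $D[X,Y]=[DX,Y]+[X,DY]$. $(G,g,J)$ is an algebraic Schouten soliton associated to $\nabla^k$ (with real constants $\lambda_0,c$) if $\widetilde{\mathrm{Ric}}^k=(s^k\lambda_0+c)\mathrm{Id}+D$ for some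 derivation $D$. *)

(* Defs.v *)
From HB Require Import structures.
From mathcomp Require Import all_boot all_order all_algebra.
From mathcomp Require Import reals.
Set Implicit Arguments. Unset Strict Implicit. Unset Printing Implicit Defensive.
Import Order.TTheory GRing.Theory Num.Theory.
Local Open Scope ring_scope.

(* The Lie algebra g = R^3, elements are row vectors x = x1 e1 + x2 e2 + x3 e3,
   stored as 'rV[R]_3 with indices 0,1,2 standing for e1,e2,e3.
   Left-invariant tensors are identified with their values on g. *)
Section Defs.
Variable R : realType.
Notation vec := 'rV[R]_3.

Definition i1 : 'I_3 := inord 0.
Definition i2 : 'I_3 := inord 1.
Definition i3 : 'I_3 := inord 2.

Definition comp (x : vec) (i : 'I_3) : R := x ord0 i.
Definition ebasis (i : 'I_3) : vec := \row_(k < 3) (k == i)%:R.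
Definition e1 := ebasis i1.
Definition e2 := ebasis i2.
Definition e3 := ebasis i3.

(* The bracket of g_7, extended bilinearly from
   [e1,e2] = -a e1 - b e2 - b e3, [e1,e3] = a e1 + b e2 + b e3,
   [e2,e3] = gm e1 + dl e2 + dl e3. *)
Definition br7 (a b gm dl : R) (x y : vec) : vec :=
  let p12 := comp x i1 * comp y i2 - comp x i2 * comp y i1 in
  let p13 := comp x i1 * comp y i3 - comp x i3 * comp y i1 in
  let p23 := comp x i2 * comp y i3 - comp x i3 * comp y i2 in
  p12 *: (- a *: e1 - b *: e2 - b *: e3)
  + p13 *: (a *: e1 + b *: e2 + b *: e3)
  + p23 *: (gm *: e1 + dl *: e2 + dl *: e3).

Definition eps (i : 'I_3) : R := if i == i3 then -1 else 1.

Definition gmet (x y : vec) : R := \sum_(i < 3) eps i * comp x i * comp y i.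

Definition Jst (x : vec) : vec := \row_(k < 3) (eps k * comp x k).

Section Connections.
Variable br : vec -> vec -> vec.

(* Levi-Civita connection on left-invariant fields (Koszul formula):
   2 g(nabla_X Y, Z) = g([X,Y],Z) - g([Y,Z],X) + g([Z,X],Y),
   and nabla_X Y = sum_k g(e_k,e_k) g(nabla_X Y, e_k) e_k. *)
Definition nablaLC (X Y : vec) : vec :=
  \sum_(k < 3) (eps k * ((gmet (br X Y) (ebasis k) - gmet (br Y (ebasis k)) X
                          + gmet (br (ebasis k) X) Y) / 2)) *: ebasis k.

Definition nablaJ (X Y : vec) : vec := nablaLC X (Jst Y) - Jst (nablaLC X Y).

Definition nabla0 (X Y : vec) : vec := nablaLC X Y - (1/2) *: nablaJ X (Jst Y).

Definition nabla1 (X Y : vec) : vec :=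
  nabla0 X Y - (1/4) *: (nablaJ Y (Jst X) - nablaJ (Jst Y) X).

Definition curv1 (X Y Z : vec) : vec :=
  nabla1 X (nabla1 Y Z) - nabla1 Y (nabla1 X Z) - nabla1 (br X Y) Z.

Definition rho1 (X Y : vec) : R :=
  - gmet (curv1 X e1 Y) e1 - gmet (curv1 X e2 Y) e2 + gmet (curv1 X e3 Y) e3.

Definition rho1t (X Y : vec) : R := (rho1 X Y + rho1 Y X) / 2.

(* g(Ric X, Y) = rho1t(X,Y) *)
Definition Ric1t (X : vec) : vec :=
  \sum_(k < 3) (eps k * rho1t X (ebasis k)) *: ebasis k.

Definition scal1 : R := rho1t e1 e1 + rho1t e2 e2 - rho1t e3 e3.

Definition is_derivation (D : 'M[R]_3) : Prop :=
  forall X Y : vec, br X Y *m D = br (X *m D) Y + br X (Y *m D).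

Definition alg_schouten_soliton1 (lambda0 c : R) : Prop :=
  exists D : 'M[R]_3, is_derivation D /\
    forall X : vec, Ric1t X = (scal1 * lambda0 + c) *: X + X *m D.

End Connections.
End Defs.

(* Main.v *)
Require Import Defs.
From HB Require Import structures.
From mathcomp Require Import all_boot all_order all_algebra.
From mathcomp Require Import reals ring lra.
Import Order.TTheory GRing.Theory Num.Theory.
Local Open Scope ring_scope.
Set Implicit Arguments. Unset Strict Implicit.

Notation cp := Defs.comp.
Section S.
Variable R : realType.
Notation vec := 'rV[R]_3.
Implicit Types u v x y : vec.

Lemma sum3 (F : 'I_3 -> R) : \sum_(k < 3) F k = F (i1) + F (i2) + F (i3).
Proof.
rewrite !big_ord_recr big_ord0 /= add0r.
by congr (F _ + F _ + F _); apply/val_inj; rewrite /= inordK.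
Qed.
Lemma sum3v (F : 'I_3 -> vec) : \sum_(k < 3) F k = F (i1) + F (i2) + F (i3).
Proof.
rewrite !big_ord_recr big_ord0 /= add0r.
by congr (F _ + F _ + F _); apply/val_inj; rewrite /= inordK.
Qed.
Lemma ord3P (j : 'I_3) : [\/ j = i1, j = i2 | j = i3].
Proof.
case: j => [[|[|[|m]]] Hm] //.
- by apply: Or31; apply/val_inj; rewrite /= inordK.
- by apply: Or32; apply/val_inj; rewrite /= inordK.
- by apply: Or33; apply/val_inj; rewrite /= inordK.
Qed.
Lemma v1 : val i1 = 0%N. Proof. by rewrite /= inordK. Qed.
Lemma v2 : val i2 = 1%N. Proof. by rewrite /= inordK. Qed.
Lemma v3 : val i3 = 2%N. Proof. by rewrite /= inordK. Qed.
Lemma eqI : ((i1 == i2) = false) * ((i1 == i3) = false) * ((i2 == i1) = false)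
  * ((i2 == i3) = false) * ((i3 == i1) = false) * ((i3 == i2) = false).
Proof. by rewrite -!val_eqE /= !v1 !v2 !v3. Qed.
Lemma eps1 : eps R i1 = 1 :> R. Proof. by rewrite /eps eqI. Qed.
Lemma eps2 : eps R i2 = 1 :> R. Proof. by rewrite /eps eqI. Qed.
Lemma eps3 : eps R i3 = -1 :> R. Proof. by rewrite /eps eqxx. Qed.

Lemma compD u v i : cp (u + v) i = cp u i + cp v i. Proof. by rewrite /Defs.comp mxE. Qed.
Lemma compN u i : cp (- u) i = - cp u i. Proof. by rewrite /Defs.comp mxE. Qed.
Lemma compB u v i : cp (u - v) i = cp u i - cp v i. Proof. by rewrite /Defs.comp !mxE. Qed.
Lemma compZ (s : R) u i : cp (s *: u) i = s * cp u i. Proof. by rewrite /Defs.comp mxE. Qed.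
Lemma compJ u i : cp (Jst u) i = eps R i * cp u i. Proof. by rewrite /Defs.comp mxE. Qed.
Lemma compE i k : cp (ebasis R k) i = (i == k)%:R. Proof. by rewrite /Defs.comp mxE. Qed.
Lemma gmetE u v : gmet u v = cp u i1 * cp v i1 + cp u i2 * cp v i2 - cp u i3 * cp v i3.
Proof. rewrite /gmet sum3 eps1 eps2 eps3; ring. Qed.

Definition mkv (p q r : R) : vec := p *: e1 R + q *: e2 R + r *: e3 R.
Lemma comp_mkv p q r : (cp (mkv p q r) i1 = p) * (cp (mkv p q r) i2 = q) * (cp (mkv p q r) i3 = r).
Proof. rewrite /mkv /e1 /e2 /e3 !compD !compZ !compE !eqxx !eqI /=. by rewrite !mulr0 !mulr1 !addr0 !add0r. Qed.

Lemma vecP u v : cp u i1 = cp v i1 -> cp u i2 = cp v i2 -> cp u i3 = cp v i3 -> u = v.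
Proof.
move=> h1 h2 h3; apply/matrixP => i j; rewrite [i]ord1.
by case: (ord3P j) => ->.
Qed.

Variables a b gm dl : R.
Definition N1 x y := mkv
  (- a * cp x i1 * cp y i2 - a * cp x i3 * cp y i1 - b * cp x i2 * cp y i2 - gm * cp x i3 * cp y i2)
  (a * cp x i1 * cp y i1 + b * cp x i2 * cp y i1 - b * cp x i3 * cp y i1 - dl * cp x i3 * cp y i2)
  (b * cp x i1 * cp y i3 + dl * cp x i2 * cp y i3).


Notation B x y := (br7 a b gm dl x y).
Lemma brE x y :
  (cp (B x y) i1 = - gm*cp x i3*cp y i2 + gm*cp x i2*cp y i3 - a*cp x i3*cp y i1 + a*cp x i2*cp y i1 + a*cp x i1*cp y i3 - a*cp x i1*cp y i2)
* (cp (B x y) i2 = - dl*cp x i3*cp y i2 + dl*cp x i2*cp y i3 - b*cp x i3*cp y i1 + b*cp x i2*cp y i1 + b*cp x i1*cp y i3 - b*cp x i1*cp y i2)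
* (cp (B x y) i3 = - dl*cp x i3*cp y i2 + dl*cp x i2*cp y i3 - b*cp x i3*cp y i1 + b*cp x i2*cp y i1 + b*cp x i1*cp y i3 - b*cp x i1*cp y i2).
Proof.
rewrite /br7 /e1 /e2 /e3 /= !(compD, compN, compZ) !compE !eqxx !eqI /=.
split; [split|]. all: ring.
Qed.
Lemma LCE x y : nablaLC (br7 a b gm dl) x y = mkv
  (-(1/2)*gm*cp x i3*cp y i2 + (1/2)*gm*cp x i2*cp y i3 - b*cp x i3*cp y i3 + b*cp x i3*cp y i2 + b*cp x i2*cp y i3 - b*cp x i2*cp y i2 + a*cp x i1*cp y i3 - a*cp x i1*cp y i2)
  (- dl*cp x i3*cp y i3 + dl*cp x i2*cp y i3 + (1/2)*gm*cp x i3*cp y i1 + (1/2)*gm*cp x i1*cp y i3 - b*cp x i3*cp y i1 + b*cp x i2*cp y i1 + a*cp x i1*cp y i1)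
  (- dl*cp x i3*cp y i2 + dl*cp x i2*cp y i2 + (1/2)*gm*cp x i2*cp y i1 + (1/2)*gm*cp x i1*cp y i2 - b*cp x i3*cp y i1 + b*cp x i2*cp y i1 + a*cp x i1*cp y i1).
Proof.
rewrite /nablaLC !sum3v !gmetE !brE !compE !eqxx !eqI eps1 eps2 eps3.
apply: vecP; rewrite !compD !compZ !compE !eqxx !eqI ?comp_mkv /=; by field.
Qed.
Lemma JE x : Jst x = mkv (cp x i1) (cp x i2) (- cp x i3).
Proof. apply: vecP; rewrite !compJ ?eps1 ?eps2 ?eps3 /mkv /e1 /e2 /e3 !(compD, compZ, compN) !compE !eqxx !eqI /=; ring. Qed.

Lemma nabla1E x y : nabla1 (br7 a b gm dl) x y = N1 x y.
Proof.
rewrite /nabla1 /nabla0 /nablaJ !JE !LCE ?JE.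
apply: vecP; rewrite /N1 !(comp_mkv, compD, compZ, compN). all: field. all: done.
Qed.


Lemma N1c x y :
  (cp (N1 x y) i1 = - a * cp x i1 * cp y i2 - a * cp x i3 * cp y i1 - b * cp x i2 * cp y i2 - gm * cp x i3 * cp y i2)
* (cp (N1 x y) i2 = a * cp x i1 * cp y i1 + b * cp x i2 * cp y i1 - b * cp x i3 * cp y i1 - dl * cp x i3 * cp y i2)
* (cp (N1 x y) i3 = b * cp x i1 * cp y i3 + dl * cp x i2 * cp y i3).
Proof. by rewrite /N1 !comp_mkv. Qed.

End S.
Section T.
Variable R : realType.
Notation vec := 'rV[R]_3.
Variables a b gm dl : R.
Definition T := (R * R * R)%type.
Definition p1 (t : T) := t.1.1.
Definition p2 (t : T) := t.1.2.
Definition p3 (t : T) := t.2.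
Definition tr (x : vec) : T := (cp x i1, cp x i2, cp x i3).
Definition fT (x y : T) : T :=
  (- a * p1 x * p2 y - a * p3 x * p1 y - b * p2 x * p2 y - gm * p3 x * p2 y,
   a * p1 x * p1 y + b * p2 x * p1 y - b * p3 x * p1 y - dl * p3 x * p2 y,
   b * p1 x * p3 y + dl * p2 x * p3 y).
Definition brT (x y : T) : T :=
  (- gm * p3 x * p2 y + gm * p2 x * p3 y - a * p3 x * p1 y + a * p2 x * p1 y + a * p1 x * p3 y - a * p1 x * p2 y,
   - dl * p3 x * p2 y + dl * p2 x * p3 y - b * p3 x * p1 y + b * p2 x * p1 y + b * p1 x * p3 y - b * p1 x * p2 y,
   - dl * p3 x * p2 y + dl * p2 x * p3 y - b * p3 x * p1 y + b * p2 x * p1 y + b * p1 x * p3 y - b * p1 x * p2 y).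
Definition subT (x y : T) : T := (p1 x - p1 y, p2 x - p2 y, p3 x - p3 y).
Definition gT (x y : T) : R := p1 x * p1 y + p2 x * p2 y - p3 x * p3 y.
Definition curvT x y z := subT (subT (fT x (fT y z)) (fT y (fT x z))) (fT (brT x y) z).
Definition rhoT (u1 u2 u3 X Y : T) :=
  - gT (curvT X u1 Y) u1 - gT (curvT X u2 Y) u2 + gT (curvT X u3 Y) u3.

Lemma tr_nabla x y : tr (nabla1 (br7 a b gm dl) x y) = fT (tr x) (tr y).
Proof. by rewrite nabla1E /tr !N1c. Qed.
Lemma tr_br x y : tr (br7 a b gm dl x y) = brT (tr x) (tr y).
Proof. by rewrite /tr !brE. Qed.
Lemma tr_sub x y : tr (x - y) = subT (tr x) (tr y).
Proof. by rewrite /tr !compD !compN. Qed.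
Lemma gmet_tr x y : gmet x y = gT (tr x) (tr y).
Proof. by rewrite gmetE. Qed.



Section G.
Variables (f br : vec -> vec -> vec).
Hypothesis hf : forall x y, tr (f x y) = fT (tr x) (tr y).
Hypothesis hb : forall x y, tr (br x y) = brT (tr x) (tr y).
Definition curv_of x y z := f x (f y z) - f y (f x z) - f (br x y) z.
Definition rho_of (u1 u2 u3 X Y : vec) :=
  - gmet (curv_of X u1 Y) u1 - gmet (curv_of X u2 Y) u2 + gmet (curv_of X u3 Y) u3.
Lemma tr_curv x y z : tr (curv_of x y z) = curvT (tr x) (tr y) (tr z).
Proof. by rewrite /curv_of /curvT !tr_sub !hf hb. Qed.
Lemma rho_of_tr u1 u2 u3 X Y : rho_of u1 u2 u3 X Y = rhoT (tr u1) (tr u2) (tr u3) (tr X) (tr Y).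
Proof. by rewrite /rho_of /rhoT !gmet_tr !tr_curv. Qed.
End G.

Lemma rho1_tr X Y : rho1 (br7 a b gm dl) X Y =
  rhoT (tr (e1 R)) (tr (e2 R)) (tr (e3 R)) (tr X) (tr Y).
Proof.
rewrite -(rho_of_tr tr_nabla tr_br). reflexivity.
Qed.
Lemma tr_e : (tr (e1 R) = (1,0,0)) * (tr (e2 R) = (0,1,0)) * (tr (e3 R) = (0,0,1)).
Proof. by rewrite /tr /e1 /e2 /e3 !compE !eqxx !eqI. Qed.

Definition E1 : T := (1,0,0).
Definition E2 : T := (0,1,0).
Definition E3 : T := (0,0,1).

Lemma rho1_trE X Y : rho1 (br7 a b gm dl) X Y = rhoT E1 E2 E3 (tr X) (tr Y).
Proof. by rewrite rho1_tr !tr_e. Qed.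

Definition RicF x := mkv
  (- a^+2 * cp x i1 + (b*dl - a*b)/2 * cp x i2 + (b*dl + a*b) * cp x i3)
  ((b*dl - a*b)/2 * cp x i1 + (- b*gm - b^+2 - a^+2) * cp x i2 + (dl^+2 + b*gm/2 + a*dl/2) * cp x i3)
  (- (b*dl + a*b) * cp x i1 - (dl^+2 + b*gm/2 + a*dl/2) * cp x i2).

Section G2.
Variable r : vec -> vec -> R.
Hypothesis hr : forall X Y, r X Y = rhoT E1 E2 E3 (tr X) (tr Y).
Variables u1 u2 u3 : vec.
Hypothesis hu : (tr u1 = E1) * (tr u2 = E2) * (tr u3 = E3).
Hypothesis hc : [/\ (cp u1 i1 = 1) * (cp u1 i2 = 0) * (cp u1 i3 = 0),
   (cp u2 i1 = 0) * (cp u2 i2 = 1) * (cp u2 i3 = 0) &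
   (cp u3 i1 = 0) * (cp u3 i2 = 0) * (cp u3 i3 = 1)].
Definition rt_of X Y := (r X Y + r Y X) / 2.
Definition Ric_of X := (eps R i1 * rt_of X u1) *: u1 + (eps R i2 * rt_of X u2) *: u2 + (eps R i3 * rt_of X u3) *: u3.
Definition scal_of := rt_of u1 u1 + rt_of u2 u2 - rt_of u3 u3.

Lemma Ric_ofE X : Ric_of X = RicF X.
Proof.
case: hc => c1 c2 c3.
apply: vecP; rewrite /RicF !comp_mkv /Ric_of /rt_of !compD !compZ !c1 !c2 !c3 !hr !hu eps1 eps2 eps3 /tr.
all: cbv beta iota delta [rhoT curvT fT brT subT gT p1 p2 p3 fst snd E1 E2 E3].
all: field. all: done.
Qed.
Lemma scal_ofE : scal_of = - b * gm - b^+2 - 2 * a^+2.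
Proof.
rewrite /scal_of /rt_of !hr !hu.
cbv beta iota delta [rhoT curvT fT brT subT gT p1 p2 p3 fst snd E1 E2 E3].
field. done.
Qed.
End G2.

Lemma RicE X : Ric1t (br7 a b gm dl) X = RicF X.
Proof.
have hc : [/\ (cp (e1 R) i1 = 1) * (cp (e1 R) i2 = 0) * (cp (e1 R) i3 = 0),
   (cp (e2 R) i1 = 0) * (cp (e2 R) i2 = 1) * (cp (e2 R) i3 = 0) &
   (cp (e3 R) i1 = 0) * (cp (e3 R) i2 = 0) * (cp (e3 R) i3 = 1)].
  by rewrite /e1 /e2 /e3 !compE !eqxx !eqI.
rewrite -(Ric_ofE rho1_trE tr_e hc X).
rewrite /Ric1t sum3v. reflexivity.
Qed.

Lemma scalE : scal1 (br7 a b gm dl) = - b * gm - b^+2 - 2 * a^+2.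
Proof.
have hc : [/\ (cp (e1 R) i1 = 1) * (cp (e1 R) i2 = 0) * (cp (e1 R) i3 = 0),
   (cp (e2 R) i1 = 0) * (cp (e2 R) i2 = 1) * (cp (e2 R) i3 = 0) &
   (cp (e3 R) i1 = 0) * (cp (e3 R) i2 = 0) * (cp (e3 R) i3 = 1)].
  by rewrite /e1 /e2 /e3 !compE !eqxx !eqI.
rewrite -(scal_ofE rho1_trE tr_e). reflexivity.
Qed.
End T.

Section M.
Variable R : realType.
Notation vec := 'rV[R]_3.
Variables a b gm dl : R.

Lemma cp_mul (X : vec) (A : 'M[R]_3) j :
  cp (X *m A) j = cp X i1 * A i1 j + cp X i2 * A i2 j + cp X i3 * A i3 j.
Proof. by rewrite /Defs.comp mxE sum3. Qed.

Lemma cp_emul i (A : 'M[R]_3) j : cp (ebasis R i *m A) j = A i j.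
Proof.
rewrite /Defs.comp !mxE (bigD1 i) //= big1 => [|l /negbTE nl]; rewrite !mxE ?eqxx ?nl.
  by rewrite mul1r addr0.
by rewrite mul0r.
Qed.

Lemma eq0_of (x y z : R) : x = y -> z = x - y -> z = 0.
Proof. by move=> -> ->; rewrite subrr. Qed.

End M.
Section F.
Variable R : realType.
Notation vec := 'rV[R]_3.
Variables a b gm dl lambda0 c : R.
Variable D : 'M[R]_3.
Hypothesis hder : is_derivation (br7 a b gm dl) D.
Hypothesis hR : forall X : vec, Ric1t (br7 a b gm dl) X = (scal1 (br7 a b gm dl) * lambda0 + c) *: X + X *m D.

Lemma bT : (true%:R = 1 :> R) * (false%:R = 0 :> R). Proof. by []. Qed.

Lemma hD i j : D i j = cp (RicF a b gm dl (ebasis R i)) j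
   - ((- b * gm - b^+2 - 2 * a^+2) * lambda0 + c) * (j == i)%:R.
Proof.
have := congr1 (fun v => cp v j) (hR (ebasis R i)).
rewrite /= RicE => H; rewrite [cp (_ + _ *m _) _]compD compZ cp_emul compE scalE in H; rewrite H; ring.
Qed.

Lemma E010 : (-1) * b * gm * dl + (-3 / 2) * b ^+ 2 * dl + (-1) * a * c + 1 * a * dl ^+ 2 + (-3 / 2) * a * b * gm + 1 * a * b * gm * lambda0 + (-3 / 2) * a * b ^+ 2 + 1 * a * b ^+ 2 * lambda0 + (1 / 2) * a ^+ 2 * dl + (-1) * a ^+ 3 + 2 * a ^+ 3 * lambda0 = 0.
Proof.
have := congr1 (fun v => cp v i1) (hder (ebasis R i1) (ebasis R i2)).
rewrite /= !cp_mul !brE compD !brE ?cp_mul ?cp_emul !compE !eqxx !eqI !hD /RicF !comp_mkv !compE !eqxx !eqI !bT.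
move/eq0_of; apply. by field.
Qed.
Lemma E011 : (-1) * b * c + (-1) * b * dl ^+ 2 + 1 * b ^+ 2 * gm * lambda0 + 1 * b ^+ 3 * lambda0 + (-3 / 2) * a * b * dl + (-1 / 2) * a ^+ 2 * b + 2 * a ^+ 2 * b * lambda0 = 0.
Proof.
have := congr1 (fun v => cp v i2) (hder (ebasis R i1) (ebasis R i2)).
rewrite /= !cp_mul !brE compD !brE ?cp_mul ?cp_emul !compE !eqxx !eqI !hD /RicF !comp_mkv !compE !eqxx !eqI !bT.
move/eq0_of; apply. by field.
Qed.
Lemma E012 : (-1) * b * c + 1 * b * dl ^+ 2 + 1 * b ^+ 2 * gm * lambda0 + (-1) * b ^+ 3 + 1 * b ^+ 3 * lambda0 + 1 * a * b * dl + (-1) * a ^+ 2 * b + 2 * a ^+ 2 * b * lambda0 = 0.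
Proof.
have := congr1 (fun v => cp v i3) (hder (ebasis R i1) (ebasis R i2)).
rewrite /= !cp_mul !brE compD !brE ?cp_mul ?cp_emul !compE !eqxx !eqI !hD /RicF !comp_mkv !compE !eqxx !eqI !bT.
move/eq0_of; apply. by field.
Qed.
Lemma E020 : (-1 / 2) * b * gm * dl + (3 / 2) * b ^+ 2 * dl + 1 * a * c + 1 * a * dl ^+ 2 + 1 * a * b * gm + (-1) * a * b * gm * lambda0 + (1 / 2) * a * b ^+ 2 + (-1) * a * b ^+ 2 * lambda0 + (1 / 2) * a ^+ 2 * dl + (-2) * a ^+ 3 * lambda0 = 0.
Proof.
have := congr1 (fun v => cp v i1) (hder (ebasis R i1) (ebasis R i3)).
rewrite /= !cp_mul !brE compD !brE ?cp_mul ?cp_emul !compE !eqxx !eqI !hD /RicF !comp_mkv !compE !eqxx !eqI !bT.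
move/eq0_of; apply. by field.
Qed.
Lemma E022 : 1 * b * c + (-1 / 2) * b * dl ^+ 2 + (-1) * b ^+ 2 * gm * lambda0 + (-1) * b ^+ 3 * lambda0 + (-1 / 2) * a * b * dl + (-2) * a ^+ 2 * b * lambda0 = 0.
Proof.
have := congr1 (fun v => cp v i3) (hder (ebasis R i1) (ebasis R i3)).
rewrite /= !cp_mul !brE compD !brE ?cp_mul ?cp_emul !compE !eqxx !eqI !hD /RicF !comp_mkv !compE !eqxx !eqI !bT.
move/eq0_of; apply. by field.
Qed.
Lemma E121 : 1 * dl * c + 1 * dl ^+ 3 + 1 * b * gm * dl + (-1) * b * gm * dl * lambda0 + (-3 / 2) * b ^+ 2 * dl + (-1) * b ^+ 2 * dl * lambda0 + (1 / 2) * a * dl ^+ 2 + (-1 / 2) * a * b * gm + (-1 / 2) * a * b ^+ 2 + (-2) * a ^+ 2 * dl * lambda0 = 0.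
Proof.
have := congr1 (fun v => cp v i2) (hder (ebasis R i2) (ebasis R i3)).
rewrite /= !cp_mul !brE compD !brE ?cp_mul ?cp_emul !compE !eqxx !eqI !hD /RicF !comp_mkv !compE !eqxx !eqI !bT.
move/eq0_of; apply. by field.
Qed.
Lemma E122 : 1 * dl * c + (-1) * dl ^+ 3 + (-1 / 2) * b * gm * dl + (-1) * b * gm * dl * lambda0 + (-1 / 2) * b ^+ 2 * dl + (-1) * b ^+ 2 * dl * lambda0 + (-1 / 2) * a * dl ^+ 2 + (-1) * a * b * gm + (-1 / 2) * a * b ^+ 2 + 1 * a ^+ 2 * dl + (-2) * a ^+ 2 * dl * lambda0 = 0.
Proof.
have := congr1 (fun v => cp v i3) (hder (ebasis R i2) (ebasis R i3)).
rewrite /= !cp_mul !brE compD !brE ?cp_mul ?cp_emul !compE !eqxx !eqI !hD /RicF !comp_mkv !compE !eqxx !eqI !bT.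
move/eq0_of; apply. by field.
Qed.

Lemma fwd (had : a + dl != 0) (hag : a * gm = 0) :
  [/\ a != 0, b = 0, gm = 0, dl = a / 2 & c = - (a ^+ 2) / 2 + 2 * a ^+ 2 * lambda0].
Proof.
have E1 := E011; have E2 := E012; have E3 := E022.
have hb : b = 0.
  apply/eqP/negPn/negP => hb0.
  have h1 : b * ((3 * dl + a) * (a + dl)) = 0 by lra.
  move/eqP: h1; rewrite !mulf_eq0 (negbTE hb0) (negbTE had) /= orbF => /eqP ha.
  have ha' : a = - 3 * dl by lra.
  have h2 : b * (b ^+ 2 + 10 * dl ^+ 2) = 0.
    rewrite ha' in E2 E3; lra.
  move/eqP: h2; rewrite mulf_eq0 (negbTE hb0) /= => /eqP h2.
  have : b ^+ 2 = 0 by nra.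
  by move/eqP; rewrite expf_eq0 /= (negbTE hb0).
have F1 := E010; have F2 := E020; have F3 := E121; have F4 := E122.
rewrite hb in F1 F2 F3 F4.
have h3 : a * ((2 * dl - a) * (a + dl)) = 0 by lra.
have h4 : dl * ((2 * dl - a) * (a + dl)) = 0 by lra.
have h2d : 2 * dl - a = 0.
  apply/eqP/negPn/negP => hn.
  move/eqP: h3; rewrite !mulf_eq0 (negbTE hn) (negbTE had) /= !orbF => /eqP a0.
  move/eqP: h4; rewrite !mulf_eq0 (negbTE hn) (negbTE had) /= !orbF => /eqP d0.
  by move: had; rewrite a0 d0 addr0 eqxx.
have hd : dl = a / 2 by lra.
have ha : a != 0.
  apply/negP => /eqP a0; move: had; rewrite hd a0 mul0r addr0 eqxx //.
have hg : gm = 0.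
  by move/eqP: hag; rewrite mulf_eq0 (negbTE ha) /= => /eqP.
split => //.
have h5 : a * (c - (- (a ^+ 2) / 2 + 2 * a ^+ 2 * lambda0)) = 0.
  rewrite hd in F1; lra.
move/eqP: h5; rewrite mulf_eq0 (negbTE ha) /= subr_eq0 => /eqP //.
Qed.
End F.

Section B.
Variable R : realType.
Notation vec := 'rV[R]_3.
Variables a b gm dl lambda0 c : R.
Definition kk := scal1 (br7 a b gm dl) * lambda0 + c.
Definition DD : 'M[R]_3 := \matrix_(i < 3, j < 3) (cp (RicF a b gm dl (ebasis R i)) j - kk * (i == j)%:R).

Lemma bT' : (true%:R = 1 :> R) * (false%:R = 0 :> R). Proof. by []. Qed.

Lemma DD_ric X : Ric1t (br7 a b gm dl) X = kk *: X + X *m DD.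
Proof.
rewrite RicE; apply: vecP; rewrite [cp (RicF _ _ _ _ _) _]comp_mkv compD compZ cp_mul !mxE
  !comp_mkv !compE !eqxx !eqI !bT'; by field.
Qed.

Lemma DD_der (hb : b = 0) (hg : gm = 0) (hd : dl = a / 2)
  (hc : c = - (a ^+ 2) / 2 + 2 * a ^+ 2 * lambda0) : is_derivation (br7 a b gm dl) DD.
Proof.
move=> X Y; apply: vecP; rewrite cp_mul !brE compD !brE !cp_mul !mxE
  !comp_mkv !compE !eqxx !eqI !bT' /kk scalE hb hg hd hc; by field.
Qed.
End B.

Unset Implicit Arguments.

Theorem theorem4p15 (R : realType) (a b gm dl lambda0 c : R)
  (had : a + dl != 0) (hag : a * gm = 0) :
  alg_schouten_soliton1 (br7 a b gm dl) lambda0 c <->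
  [/\ a != 0, b = 0, gm = 0, dl = a / 2 &
      c = - (a ^+ 2) / 2 + 2 * a ^+ 2 * lambda0].
Proof.
split.
- case=> D [hder hR].
  exact: (fwd hder hR had hag).
- case=> ha hb hg hd hc.
  exists (DD a b gm dl lambda0 c); split.
  + exact: DD_der.
  + exact: DD_ric.
Qed.
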